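(* Let $c_0\ge0$, $c_1>0$, $a\in\mathbb{R}$, $v_\circ>0$, let $v$ solve $v'=a-c_0v-c_1v^2$, $v(0)=v_\circ$, $s(t)=\int_0^tv$, and suppose one of the following holds: (c) $w$ real, $a\ge0$, $v_\circ>v_\infty$, with $(t_{\min},t_{\max})=(t_\infty,\infty)$; (d) $w$ real, $a<0$, with $(t_{\min},t_{\max})=(t_\infty,t_\circ)$; (e) $w$ complex, with $(t_{\min},t_{\max})=(t_{v_\infty},t_{v_\circ})$. Let $t_\star\in(t_{\min},t_{\max})$, $\zeta=s(t_\star)$, $f(t)=s(t)-\zeta$, and define $t_0=0$ and $$t_{k+1}=\begin{cases}t_k-\dfrac{f(t_k)}{f'(t_k)+f(t_k)/(t_k-t_{\min})},& f(t_k)>0,\\[2mm] t_k-\dfrac{f(t_k)}{f'(t_k)},& f(t_k)\le0.\end{cases}$$ Then all $t_k$ lie in $(t_{\min},t_{\max})$, $t_k\to t_\star$, and the convergence is quadratic: $\limsup_{k\to\infty}|t_{k+1}-t_\star|/|t_k-t_\star|^2<\infty$ (over $k$ with $t_k\neq t_\star$).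
   Context: Notation: $w=\sqrt{c_0^2+4ac_1}\ge 0$ when $c_0^2+4ac_1\ge0$ (''$w$ real''); when $c_0^2+4ac_1<0$ we say ''$w$ is complex'' and write $|w|=\sqrt{-(c_0^2+4ac_1)}>0$. Set $\alpha=(w+c_0)/2$, $\beta=(w-c_0)/2$, $\gamma=c_1v_\circ+\alpha$, $v_\infty=\beta/c_1$, $\mathcal{L}(x,c)=c^{-1}\log(1-cx)$ ($c\ne0$), $\mathcal{L}(x,0)=-x$, $t_\circ=\mathcal{L}\big(\frac{v_\circ}{a+v_\circ\beta},w\big)$ (zero of $v$), $t_\infty=\mathcal{L}(1/\gamma,w)$ (pole of $v$); in the complex case $\theta_0=\arctan\frac{v_\circ|w|}{v_\circ c_0+2|a|}$, $\theta_1=\arctan\frac{|w|}{2c_1v_\circ+c_0}\in(0,\pi/2]$, $t_{v_\circ}=2\theta_0/|w|$, $t_{v_\infty}=-2\theta_1/|w|$. On $(t_{\min},t_{\max})$ the solution $v$ is finite and positive. *)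

(* Defs.v *)
From Stdlib Require Import Reals Lra.
Open Scope R_scope.

Definition qdisc (a c0 c1 : R) : R := c0 ^ 2 + 4 * a * c1.
(* w in the real case (qdisc >= 0) *)
Definition wr (a c0 c1 : R) : R := sqrt (qdisc a c0 c1).
(* |w| in the complex case (qdisc < 0) *)
Definition wabs (a c0 c1 : R) : R := sqrt (- qdisc a c0 c1).

Definition alpha (a c0 c1 : R) : R := (wr a c0 c1 + c0) / 2.
Definition beta (a c0 c1 : R) : R := (wr a c0 c1 - c0) / 2.
Definition gamma (a c0 c1 v0 : R) : R := c1 * v0 + alpha a c0 c1.
Definition v_inf (a c0 c1 : R) : R := beta a c0 c1 / c1.

Definition Lf (x c : R) : R :=
  if Req_EM_T c 0 then - x else ln (1 - c * x) / c.

Definition t_circ (a c0 c1 v0 : R) : R :=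
  Lf (v0 / (a + v0 * beta a c0 c1)) (wr a c0 c1).
Definition t_inf (a c0 c1 v0 : R) : R :=
  Lf (1 / gamma a c0 c1 v0) (wr a c0 c1).

Definition theta0 (a c0 c1 v0 : R) : R :=
  atan (v0 * wabs a c0 c1 / (v0 * c0 + 2 * Rabs a)).
Definition theta1 (a c0 c1 v0 : R) : R :=
  atan (wabs a c0 c1 / (2 * c1 * v0 + c0)).
Definition t_vcirc (a c0 c1 v0 : R) : R := 2 * theta0 a c0 c1 v0 / wabs a c0 c1.
Definition t_vinf (a c0 c1 v0 : R) : R := - (2 * theta1 a c0 c1 v0 / wabs a c0 c1).

(* interval (tmin, tmax) with tmax = +infinity encoded by None *)
Definition in_interval (tmin : R) (tmax : option R) (t : R) : Prop :=
  tmin < t /\ match tmax with None => True | Some b => t < b end.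

Definition newton_step (s v : R -> R) (tmin zeta t : R) : R :=
  let ft := s t - zeta in
  if Rlt_dec 0 ft then t - ft / (v t + ft / (t - tmin))
  else t - ft / v t.

Fixpoint newton_seq (s v : R -> R) (tmin zeta : R) (k : nat) : R :=
  match k with
  | O => 0
  | S k' => newton_step s v tmin zeta (newton_seq s v tmin zeta k')
  end.

(* Main.v *)
Require Import Defs.
From Stdlib Require Import Reals Lra Psatz Lia Arith FunctionalExtensionality Classical Machin.
Open Scope R_scope.

Lemma dl_eq f x l l' : derivable_pt_lim f x l -> l = l' -> derivable_pt_lim f x l'.
Proof. intros H ->; exact H. Qed.
Lemma dmul f g x df dg : derivable_pt_lim f x df -> derivable_pt_lim g x dg ->
  derivable_pt_lim (fun y => f y * g y) x (df * g x + f x * dg).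
Proof. intros; exact (derivable_pt_lim_mult f g x df dg H H0). Qed.
Lemma dplus f g x df dg : derivable_pt_lim f x df -> derivable_pt_lim g x dg ->
  derivable_pt_lim (fun y => f y + g y) x (df + dg).
Proof. intros; exact (derivable_pt_lim_plus f g x df dg H H0). Qed.
Lemma dminus f g x df dg : derivable_pt_lim f x df -> derivable_pt_lim g x dg ->
  derivable_pt_lim (fun y => f y - g y) x (df - dg).
Proof. intros; exact (derivable_pt_lim_minus f g x df dg H H0). Qed.
Lemma dconst c x : derivable_pt_lim (fun _ => c) x 0.
Proof. exact (derivable_pt_lim_const c x). Qed.
Lemma did x : derivable_pt_lim (fun y => y) x 1.
Proof. exact (derivable_pt_lim_id x). Qed.
Lemma dcomp f g x df dg : derivable_pt_lim g x dg -> derivable_pt_lim f (g x) df ->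
  derivable_pt_lim (fun y => f (g y)) x (df * dg).
Proof. intros; exact (derivable_pt_lim_comp g f x dg df H H0). Qed.
Lemma dexpl K x : derivable_pt_lim (fun y => exp (K * y)) x (exp (K * x) * K).
Proof.
  apply (dcomp exp (fun y => K * y)).
  - apply (dl_eq _ _ (0 * x + K * 1)); [apply dmul; [apply dconst|apply did]|ring].
  - apply derivable_pt_lim_exp.
Qed.
Lemma dcont f x l : derivable_pt_lim f x l -> continuity_pt f x.
Proof. intros H. apply (derivable_continuous_pt f x (exist _ l H)). Qed.

Lemma lin_zero (Q p : R -> R) t1 t2 : t1 < t2 ->
  (forall t, t1 <= t <= t2 -> derivable_pt_lim Q t (p t * Q t)) ->
  (forall t, t1 <= t <= t2 -> continuity_pt p t) ->
  (Q t1 = 0 -> Q t2 = 0) /\ (Q t2 = 0 -> Q t1 = 0).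
Proof.
  intros Hlt HD Hc.
  assert (HE : forall K t, t1 <= t <= t2 ->
     derivable_pt_lim (fun y => Q y * Q y * exp (- (2 * K) * y)) t
       (2 * (Q t * Q t) * (p t - K) * exp (- (2 * K) * t))).
  { intros K t Ht. eapply dl_eq.
    - apply dmul; [apply dmul; apply HD; auto| apply dexpl].
    - cbv beta; ring. }
  assert (Epos : forall K y, 0 <= Q y * Q y * exp (- (2 * K) * y)).
  { intros. apply Rmult_le_pos; [nra| left; apply exp_pos]. }
  assert (Ez : forall K y, Q y * Q y * exp (- (2 * K) * y) <= 0 -> Q y = 0).
  { intros K y H. pose proof (exp_pos (- (2 * K) * y)).
    assert (Q y * Q y <= 0).
    { apply (Rmult_le_reg_r (exp (- (2 * K) * y))); auto. lra. }
    nra. }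
  split; intros H0.
  - destruct (continuity_ab_maj p t1 t2 (Rlt_le _ _ Hlt) Hc) as [M [HM _]].
    destruct (MVT_cor2 _ _ t1 t2 Hlt (HE (p M))) as [c [E Hc']].
    rewrite H0 in E.
    assert (p c - p M <= 0) by (pose proof (HM c ltac:(lra)); lra).
    assert (0 <= 2 * (Q c * Q c)) by nra.
    pose proof (exp_pos (- (2 * p M) * c)).
    assert (2 * (Q c * Q c) * (p c - p M) * exp (- (2 * p M) * c) * (t2 - t1) <= 0).
    { assert (0 <= 2 * (Q c * Q c) * (- (p c - p M)) * exp (- (2 * p M) * c) * (t2 - t1)).
      { apply Rmult_le_pos; [|lra]. apply Rmult_le_pos; [|lra]. apply Rmult_le_pos; lra. }
      lra. }
    apply (Ez (p M)). lra.
  - destruct (continuity_ab_min p t1 t2 (Rlt_le _ _ Hlt) Hc) as [M [HM _]].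
    destruct (MVT_cor2 _ _ t1 t2 Hlt (HE (p M))) as [c [E Hc']].
    rewrite H0 in E.
    assert (0 <= p c - p M) by (pose proof (HM c ltac:(lra)); lra).
    assert (0 <= 2 * (Q c * Q c)) by nra.
    pose proof (exp_pos (- (2 * p M) * c)).
    assert (0 <= 2 * (Q c * Q c) * (p c - p M) * exp (- (2 * p M) * c) * (t2 - t1)).
    { apply Rmult_le_pos; [|lra]. apply Rmult_le_pos; [|lra]. apply Rmult_le_pos; lra. }
    apply (Ez (p M)). lra.
Qed.

Lemma in_conv tmin tmax x y t : in_interval tmin tmax x -> in_interval tmin tmax y ->
  x <= t <= y -> in_interval tmin tmax t.
Proof. unfold in_interval; destruct tmax; intuition lra. Qed.

Lemma mvt_I tmin tmax (F F' : R -> R) x y :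
  in_interval tmin tmax x -> in_interval tmin tmax y -> x < y ->
  (forall t, in_interval tmin tmax t -> derivable_pt_lim F t (F' t)) ->
  exists c, F y - F x = F' c * (y - x) /\ x < c < y.
Proof.
  intros Hx Hy Hxy HD. apply MVT_cor2; auto.
  intros c Hc. apply HD. apply (in_conv tmin tmax x y); auto.
Qed.


Lemma Rabs_div_ a b : b <> 0 -> Rabs (a / b) = Rabs a / Rabs b.
Proof. intros; unfold Rdiv; rewrite Rabs_mult, Rabs_inv; reflexivity. Qed.

Lemma alg_left t ts vt vs q : t <= ts -> 0 < vt -> vs <= q <= vt -> 0 < vs ->
  let N := t + q * (ts - t) / vt in
  t <= N <= ts /\ ts - N <= (1 - vs / vt) * (ts - t).
Proof.
  intros; subst N.
  assert (Hx : q = (q / vt) * vt) by (field; lra).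
  assert (Hy : vs = (vs / vt) * vt) by (field; lra).
  replace (q * (ts - t) / vt) with ((q / vt) * (ts - t)) by (field; lra).
  revert Hx Hy. generalize (q / vt) (vs / vt). intros x y Hx Hy.
  assert (x <= 1) by nra. assert (y <= x) by nra. assert (0 <= y) by nra.
  split; [split|]; nra.
Qed.

Lemma alg_right t ts tm vt q : ts < t -> tm < ts -> 0 < vt <= q ->
  let N := t - q * (t - ts) / (vt + q * (t - ts) / (t - tm)) in
  tm < N < t /\ N - ts <= (t - ts) / 2.
Proof.
  intros; subst N.
  assert (Hy : (q * (t - ts) / (t - tm)) * (t - tm) = q * (t - ts)) by (field; lra).
  assert (0 < q * (t - ts) / (t - tm)) by (apply Rdiv_lt_0_compat; nra).
  revert Hy H2. generalize (q * (t - ts) / (t - tm)). intros y Hy Hy0.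
  assert (Hx : (q * (t - ts) / (vt + y)) * (vt + y) = q * (t - ts)) by (field; lra).
  revert Hx. generalize (q * (t - ts) / (vt + y)). intros x Hx.
  assert (x < t - tm) by nra.
  assert (t - ts <= 2 * x) by nra.
  split; [split|]; lra.
Qed.

Lemma quad_left t ts vt q G m : t < ts -> 0 < m <= vt -> Rabs (vt - q) <= G * (ts - t) ->
  Rabs (t + q * (ts - t) / vt - ts) <= G / m * (ts - t) ^ 2.
Proof.
  intros.
  replace (t + q * (ts - t) / vt - ts) with ((ts - t) * ((q - vt) / vt)) by (field; lra).
  rewrite Rabs_mult, Rabs_div_ by lra. rewrite (Rabs_pos_eq (ts - t)) by lra.
  rewrite (Rabs_pos_eq vt) by lra. rewrite Rabs_minus_sym.
  assert (0 <= G) by (pose proof (Rabs_pos (vt - q)); nra).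
  apply Rle_trans with ((ts - t) * (G * (ts - t) / vt)).
  - apply Rmult_le_compat_l; [lra|]. unfold Rdiv. apply Rmult_le_compat_r; auto.
    left; apply Rinv_0_lt_compat; lra.
  - replace ((ts - t) * (G * (ts - t) / vt)) with (G * (ts-t)^2 * / vt) by (field; lra).
    replace (G / m * (ts - t) ^ 2) with (G * (ts-t)^2 * / m) by (field; lra).
    apply Rmult_le_compat_l; [apply Rmult_le_pos; [auto|apply pow2_ge_0]|].
    apply Rinv_le_contravar; lra.
Qed.

Lemma quad_right t ts tm vt q G V m T0 : ts < t -> 0 < T0 <= t - tm -> 0 < m <= vt ->
  0 <= q <= V -> Rabs (vt - q) <= G * (t - ts) ->
  Rabs (t - q * (t - ts) / (vt + q * (t - ts) / (t - tm)) - ts) <= (G + V / T0) / m * (t - ts) ^ 2.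
Proof.
  intros.
  assert (0 <= G) by (pose proof (Rabs_pos (vt - q)); nra).
  assert (Hy : (q * (t - ts) / (t - tm)) * (t - tm) = q * (t - ts)) by (field; lra).
  assert (0 <= q * (t - ts) / (t - tm)).
  { apply Rmult_le_pos; [nra| left; apply Rinv_0_lt_compat; lra]. }
  assert (q * (t - ts) / (t - tm) <= V * (t - ts) / T0).
  { apply Rle_trans with (V * (t - ts) / (t - tm)).
    - unfold Rdiv. apply Rmult_le_compat_r; [left; apply Rinv_0_lt_compat; lra| nra].
    - unfold Rdiv. apply Rmult_le_compat_l; [nra|]. apply Rinv_le_contravar; lra. }
  revert Hy H5 H6. generalize (q * (t - ts) / (t - tm)). intros y Hy Hy0 Hy1.
  replace (t - q * (t - ts) / (vt + y) - ts) with ((t - ts) * ((vt - q + y) / (vt + y))) by (field; lra).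
  rewrite Rabs_mult, Rabs_div_ by lra. rewrite (Rabs_pos_eq (t - ts)) by lra.
  rewrite (Rabs_pos_eq (vt + y)) by lra.
  assert (Rabs (vt - q + y) <= G * (t - ts) + V * (t - ts) / T0).
  { eapply Rle_trans; [apply Rabs_triang|]. rewrite (Rabs_pos_eq y) by lra. lra. }
  apply Rle_trans with ((t - ts) * ((G * (t - ts) + V * (t - ts) / T0) / m)).
  - apply Rmult_le_compat_l; [lra|]. unfold Rdiv.
    apply Rle_trans with (Rabs (vt - q + y) * / m).
    + apply Rmult_le_compat_l; [apply Rabs_pos|]. apply Rinv_le_contravar; lra.
    + apply Rmult_le_compat_r; [left; apply Rinv_0_lt_compat; lra| auto].
  - right. field. lra.
Qed.

Section Core.
Variables (c0 c1 a : R) (Hc0 : 0 <= c0) (Hc1 : 0 < c1) (tmin : R) (tmax : option R)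
  (v s : R -> R).
Let I := in_interval tmin tmax.
Hypothesis Hode : forall t, I t -> derivable_pt_lim v t (a - c0 * v t - c1 * (v t) ^ 2).
Hypothesis Hs : forall t, I t -> derivable_pt_lim s t (v t).
Variable tstar : R.
Hypothesis Htstar : I tstar.
Hypothesis H0 : I 0.
Hypothesis Hpos : forall t, I t -> 0 < v t.
Hypothesis Hneg : forall t, I t -> a - c0 * v t - c1 * (v t) ^ 2 <= 0.

Lemma v_dec x y : I x -> I y -> x <= y -> v y <= v x.
Proof.
  intros Hx Hy Hxy. destruct (Req_dec x y) as [->|Hne]; [lra|].
  destruct (mvt_I tmin tmax v (fun t => a - c0 * v t - c1 * (v t) ^ 2) x y)
    as [c [Hc1' Hc2]]; auto; try lra.
  assert (I c) by (apply (in_conv tmin tmax x y); auto; lra).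
  specialize (Hneg c H). nra.
Qed.

Lemma s_mvt x y : I x -> I y -> x < y ->
  exists c, s y - s x = v c * (y - x) /\ x < c < y.
Proof. intros; apply (mvt_I tmin tmax); auto. Qed.

Lemma s_inc x y : I x -> I y -> x < y -> s x < s y.
Proof.
  intros Hx Hy Hxy. destruct (s_mvt x y) as [c [E Hc]]; auto.
  assert (I c) by (apply (in_conv tmin tmax x y); auto; lra).
  specialize (Hpos c H). nra.
Qed.

Let N t := newton_step s v tmin (s tstar) t.

Lemma step_left t : I t -> t <= tstar ->
  exists xi, t <= xi <= tstar /\ N t = t + v xi * (tstar - t) / v t.
Proof.
  intros Ht Hle. unfold N, newton_step.
  destruct (Req_dec t tstar) as [->|Hne].
  - exists tstar. split; [lra|].
    destruct (Rlt_dec 0 (s tstar - s tstar)); [lra|].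
    replace (s tstar - s tstar) with 0 by ring. field. specialize (Hpos tstar Ht); lra.
  - destruct (s_mvt t tstar) as [c [E Hc]]; auto; try lra.
    exists c. split; [lra|].
    destruct (Rlt_dec 0 (s t - s tstar)).
    + assert (s t < s tstar) by (apply s_inc; auto; lra). lra.
    + replace (s t - s tstar) with (- (v c * (tstar - t))) by lra.
      field. specialize (Hpos t Ht); lra.
Qed.

Lemma step_right t : I t -> tstar < t ->
  exists xi, tstar < xi < t /\
   N t = t - v xi * (t - tstar) / (v t + v xi * (t - tstar) / (t - tmin)).
Proof.
  intros Ht Hlt. unfold N, newton_step.
  destruct (s_mvt tstar t) as [c [E Hc]]; auto.
  exists c. split; [lra|].
  destruct (Rlt_dec 0 (s t - s tstar)).
  - rewrite E. reflexivity.
  - assert (s tstar < s t) by (apply s_inc; auto). lra.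
Qed.


Lemma I_below x y : tmin < x -> x <= y -> I y -> I x.
Proof. unfold I, in_interval; destruct tmax; intuition lra. Qed.

Lemma stepI t : I t -> I (N t) /\
  (t <= tstar -> t <= N t <= tstar /\ tstar - N t <= (1 - v tstar / v t) * (tstar - t)) /\
  (tstar < t -> tmin < N t < t /\ N t - tstar <= (t - tstar) / 2).
Proof.
  intros Ht. assert (Hmin : tmin < tstar) by (destruct Htstar; auto).
  destruct (Rle_dec t tstar) as [Hle|Hgt].
  - destruct (step_left t Ht Hle) as [xi [Hxi E]].
    assert (I xi) by (apply (in_conv tmin tmax t tstar); auto).
    pose proof (v_dec t xi Ht H (proj1 Hxi)).
    pose proof (v_dec xi tstar H Htstar (proj2 Hxi)).
    pose proof (Hpos t Ht). pose proof (Hpos tstar Htstar).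
    destruct (alg_left t tstar (v t) (v tstar) (v xi)) as [A B]; auto; try lra.
    rewrite <- E in A, B.
    split; [apply (in_conv tmin tmax t tstar); auto|]. split; [auto|lra].
  - assert (Hlt : tstar < t) by lra.
    destruct (step_right t Ht Hlt) as [xi [Hxi E]].
    assert (I xi) by (apply (in_conv tmin tmax tstar t); auto; lra).
    pose proof (v_dec xi t H Ht (Rlt_le _ _ (proj2 Hxi))).
    pose proof (Hpos t Ht).
    destruct (alg_right t tstar tmin (v t) (v xi)) as [A B]; auto; try lra.
    rewrite <- E in A, B.
    split; [apply (I_below _ t); auto; lra|]. split; [lra|auto].
Qed.

Let tk := newton_seq s v tmin (s tstar).

Lemma tk_S k : tk (S k) = N (tk k).
Proof. reflexivity. Qed.

Lemma all_I k : I (tk k).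
Proof. induction k; [exact H0| rewrite tk_S; apply stepI; auto]. Qed.

Lemma hi_bound k : tk k <= Rmax 0 tstar.
Proof.
  induction k.
  - simpl. apply Rmax_l.
  - rewrite tk_S. destruct (stepI (tk k) (all_I k)) as [_ [L R]].
    destruct (Rle_dec (tk k) tstar).
    + pose proof (Rmax_r 0 tstar). destruct (L r); lra.
    + destruct (R ltac:(lra)). lra.
Qed.

Lemma left_stays j : tk j <= tstar -> forall n, tk j <= tk (j + n) <= tstar.
Proof.
  intros Hj n. induction n.
  - rewrite Nat.add_0_r; lra.
  - rewrite Nat.add_succ_r, tk_S.
    destruct (stepI _ (all_I (j + n))) as [_ [L _]]. destruct (L (proj2 IHn)). lra.
Qed.

Fixpoint mn (n : nat) : R := match n with O => tk O | S n => Rmin (mn n) (tk (S n)) end.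

Lemma mn_le n i : (i <= n)%nat -> mn n <= tk i.
Proof.
  induction n; intros Hi.
  - inversion Hi. simpl. lra.
  - inversion Hi; subst.
    + simpl. apply Rmin_r.
    + simpl. pose proof (IHn H1). pose proof (Rmin_l (mn n) (tk (S n))). lra.
Qed.

Lemma mn_gt n : tmin < mn n.
Proof.
  induction n.
  - simpl. destruct (all_I 0); auto.
  - simpl. destruct (all_I (S n)). unfold Rmin; destruct (Rle_dec _ _); auto.
Qed.

Lemma lo_bound : exists lo, tmin < lo /\ lo <= tstar /\ forall k, lo <= tk k.
Proof.
  destruct (classic (exists j, tk j <= tstar)) as [[j Hj]|Hn].
  - exists (mn j). split; [apply mn_gt|]. split; [pose proof (mn_le j j (le_n j)); lra|]. intros k.
    destruct (le_lt_dec k j) as [Hk|Hk].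
    + apply mn_le; auto.
    + replace k with (j + (k - j))%nat by lia.
      pose proof (left_stays j Hj (k - j)). pose proof (mn_le j j (le_n j)). lra.
  - exists tstar. split; [destruct Htstar; auto|]. split; [lra|]. intros k.
    destruct (Rle_dec (tk k) tstar); [exfalso; apply Hn; exists k; auto| lra].
Qed.

Lemma contraction : exists j rho, 0 <= rho < 1 /\
  forall n, Rabs (tk (j + n) - tstar) <= rho ^ n * Rabs (tk j - tstar).
Proof.
  destruct (classic (exists j, tk j <= tstar)) as [[j Hj]|Hn].
  - exists j, (1 - v tstar / v (tk j)).
    pose proof (Hpos _ (all_I j)) as Pj. pose proof (Hpos _ Htstar) as Ps.
    pose proof (v_dec _ _ (all_I j) Htstar Hj) as Vj.
    assert (0 < v tstar / v (tk j) <= 1).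
    { split; [apply Rdiv_lt_0_compat; auto|].
      apply (Rmult_le_reg_r (v (tk j))); auto. unfold Rdiv. rewrite Rmult_assoc, Rinv_l; lra. }
    split; [lra|]. intros n. induction n.
    + rewrite Nat.add_0_r. simpl. lra.
    + pose proof (left_stays j Hj n) as LS. pose proof (left_stays j Hj (S n)) as LS2.
      rewrite Nat.add_succ_r, tk_S in *.
      destruct (stepI _ (all_I (j + n))) as [_ [L _]]. destruct (L (proj2 LS)) as [_ C].
      rewrite Rabs_left1 by lra. rewrite Rabs_left1 in IHn by lra.
      rewrite Rabs_left1 by lra.
      set (t := tk (j + n)) in *.
      assert (I t) by apply all_I.
      pose proof (Hpos t H1). pose proof (v_dec _ _ (all_I j) H1 (proj1 LS)).
      assert (v tstar / v (tk j) <= v tstar / v t).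
      { unfold Rdiv. apply Rmult_le_compat_l; [lra|]. apply Rinv_le_contravar; lra. }
      simpl.
      apply Rle_trans with ((1 - v tstar / v t) * (tstar - t)); [lra|].
      apply Rle_trans with ((1 - v tstar / v (tk j)) * (tstar - t)).
      * apply Rmult_le_compat_r; lra.
      * rewrite Rmult_assoc. apply Rmult_le_compat_l; [lra|]. rewrite <- (Rabs_left1 (tk j - tstar)) by lra. lra.
  - exists O, (/2). split; [lra|]. intros n.
    assert (Hr : forall k, tstar < tk k).
    { intros k. destruct (Rle_dec (tk k) tstar); [exfalso; apply Hn; exists k; auto| lra]. }
    induction n.
    + simpl. lra.
    + simpl in *. rewrite tk_S.
      destruct (stepI _ (all_I n)) as [_ [_ R]]. destruct (R (Hr n)) as [_ C].
      pose proof (Hr (S n)). rewrite tk_S in H.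
      pose proof (Hr n).
      rewrite Rabs_pos_eq by lra. rewrite Rabs_pos_eq in IHn by lra.
      rewrite Rabs_pos_eq by (pose proof (Hr 0%nat); lra). rewrite Rabs_pos_eq in IHn by (pose proof (Hr 0%nat); lra).
      lra.
Qed.

Lemma conv : Un_cv tk tstar.
Proof.
  destruct contraction as [j [rho [Hr Hc]]].
  intros eps Heps.
  destruct (pow_lt_1_zero rho ltac:(rewrite Rabs_pos_eq; lra) (eps / (Rabs (tk j - tstar) + 1)))
    as [N0 HN0].
  { apply Rdiv_lt_0_compat; auto. pose proof (Rabs_pos (tk j - tstar)); lra. }
  exists (j + N0)%nat. intros n Hn. unfold R_dist.
  replace n with (j + (n - j))%nat by lia.
  specialize (HN0 (n - j)%nat ltac:(lia)).
  rewrite Rabs_pos_eq in HN0 by (apply pow_le; lra).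
  pose proof (Hc (n - j)%nat). pose proof (Rabs_pos (tk j - tstar)).
  assert (rho ^ (n - j) * (Rabs (tk j - tstar) + 1) < eps).
  { apply (Rmult_lt_reg_r (/ (Rabs (tk j - tstar) + 1))).
    - apply Rinv_0_lt_compat; lra.
    - rewrite Rmult_assoc, Rinv_r by lra. rewrite Rmult_1_r. exact HN0. }
  pose proof (pow_le rho (n - j) (proj1 Hr)). nra.
Qed.

Lemma quadratic : exists C (N0 : nat), forall k, (N0 <= k)%nat -> tk k <> tstar ->
  Rabs (tk (S k) - tstar) / (Rabs (tk k - tstar)) ^ 2 <= C.
Proof.
  destruct lo_bound as [lo [Hlo [Hlos Hlok]]].
  set (hi := Rmax 0 tstar).
  assert (Ilo : I lo) by (apply (I_below lo 0); auto; apply (Hlok O)).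
  assert (Ihi : I hi) by (unfold hi, Rmax; destruct (Rle_dec 0 tstar); auto).
  set (vmax := v lo). set (m := v hi).
  set (G := c1 * vmax ^ 2 + c0 * vmax - a).
  assert (Hm : 0 < m) by (apply Hpos; auto).
  assert (HG : 0 <= G) by (pose proof (Hneg lo Ilo); unfold G, vmax; lra).
  assert (HT0 : 0 < tstar - tmin) by (destruct Htstar; lra).
  assert (Hk : forall k, lo <= tk k <= hi) by (intros; split; [auto| apply hi_bound]).
  assert (HvI : forall x, lo <= x <= hi -> I x).
  { intros; apply (in_conv tmin tmax lo hi); auto. }
  assert (Vb : forall x, lo <= x <= hi -> m <= v x <= vmax).
  { intros x Hx. split; apply v_dec; auto; try apply HvI; lra. }
  assert (Lip : forall x y, lo <= x <= y -> y <= hi -> Rabs (v x - v y) <= G * (y - x)).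
  { intros x y Hx Hy. destruct (Req_dec x y) as [->|Hne].
    - rewrite Rminus_diag, Rabs_R0. lra.
    - destruct (mvt_I tmin tmax v (fun t => a - c0 * v t - c1 * (v t) ^ 2) x y) as [c [E Hc]];
        auto; try (apply HvI; lra); try lra.
      assert (Hc' : lo <= c <= hi) by lra.
      pose proof (Vb c Hc'). pose proof (Hneg c (HvI c Hc')).
      rewrite Rabs_minus_sym, E, Rabs_mult, (Rabs_pos_eq (y - x)) by lra.
      rewrite Rabs_left1 by lra. apply Rmult_le_compat_r; [lra|].
      unfold G. assert (0 < v c) by lra. assert (v c ^ 2 <= vmax ^ 2) by (simpl; nra).
      assert (c1 * v c^2 <= c1 * vmax^2) by (apply Rmult_le_compat_l; lra).
      assert (c0 * v c <= c0 * vmax) by (apply Rmult_le_compat_l; lra). lra. }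
  exists ((G + vmax / (tstar - tmin)) / m), O. intros k _ Hne.
  rewrite tk_S. pose proof (Hk k) as Hkk. set (t := tk k) in *.
  assert (It : I t) by apply all_I.
  assert (0 < Rabs (t - tstar) ^ 2) by (apply pow_lt; apply Rabs_pos_lt; lra).
  unfold Rdiv at 1. apply (Rmult_le_reg_r (Rabs (t - tstar) ^ 2)); auto.
  rewrite Rmult_assoc, Rinv_l, Rmult_1_r by lra. rewrite pow2_abs.
  assert (HvmT : 0 <= vmax / (tstar - tmin)).
  { unfold Rdiv; apply Rmult_le_pos; [pose proof (Hpos lo Ilo); unfold vmax; lra| left; apply Rinv_0_lt_compat; lra]. }
  destruct (Rle_dec t tstar) as [Hle|Hgt].
  - assert (Hlt : t < tstar) by lra.
    destruct (step_left t It Hle) as [xi [Hxi E]]. rewrite E.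
    assert (lo <= xi <= hi) by (pose proof (Rmax_r 0 tstar); unfold hi in *; lra).
    replace ((t - tstar) ^ 2) with ((tstar - t) ^ 2) by ring.
    apply Rle_trans with (G / m * (tstar - t) ^ 2).
    + apply (quad_left t tstar (v t) (v xi) G m); [lra| pose proof (Vb t Hkk); lra|].
      pose proof (Lip t xi ltac:(lra) ltac:(lra)).
      assert (G * (xi - t) <= G * (tstar - t)) by (apply Rmult_le_compat_l; lra). lra.
    + apply Rmult_le_compat_r; [apply pow2_ge_0|]. unfold Rdiv.
      apply Rmult_le_compat_r; [left; apply Rinv_0_lt_compat; auto| lra].
  - assert (Hlt : tstar < t) by lra.
    destruct (step_right t It Hlt) as [xi [Hxi E]]. rewrite E.
    assert (lo <= xi <= hi) by lra.
    apply (quad_right t tstar tmin (v t) (v xi) G vmax m (tstar - tmin)); [lra| lra | | |].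
    + pose proof (Vb t Hkk); lra.
    + pose proof (Vb xi H1); lra.
    + pose proof (Lip xi t ltac:(lra) ltac:(lra)). rewrite Rabs_minus_sym.
      assert (G * (t - xi) <= G * (t - tstar)) by (apply Rmult_le_compat_l; lra). lra.
Qed.

Theorem core_main : (forall k, I (tk k)) /\ Un_cv tk tstar /\
  (exists C (N0 : nat), forall k, (N0 <= k)%nat -> tk k <> tstar ->
    Rabs (tk (S k) - tstar) / (Rabs (tk k - tstar)) ^ 2 <= C).
Proof. split; [exact all_I| split; [exact conv| exact quadratic]]. Qed.
End Core.

Lemma riccati_Z (c0 c1 a w r1 r2 v0 tmin : R) (tmax : option R) (v Z : R -> R) :
  w = c1 * (r1 - r2) -> c0 = - (c1 * (r1 + r2)) -> a = - (c1 * r1 * r2) ->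
  (forall t, in_interval tmin tmax t -> derivable_pt_lim v t (a - c0 * v t - c1 * (v t) ^ 2)) ->
  v 0 = v0 ->
  (forall t, derivable_pt_lim Z t (c1 - w * Z t)) -> Z 0 * (v0 - r2) = 1 ->
  in_interval tmin tmax 0 ->
  forall t, in_interval tmin tmax t -> (v t - r2) * Z t = 1.
Proof.
  intros Hw Hc Ha Hode Hv0 HZ HZ0 H0 t Ht.
  set (Q := fun y => 1 - (v y - r2) * Z y).
  set (p := fun y => - c1 * (v y - r2)).
  assert (HD : forall y, in_interval tmin tmax y -> derivable_pt_lim Q y (p y * Q y)).
  { intros y Hy. unfold Q, p. eapply dl_eq.
    - apply dminus; [apply dconst| apply dmul; [apply dminus; [apply Hode; auto| apply dconst]| apply HZ]].
    - cbv beta. rewrite Hw, Hc, Ha. ring. }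
  assert (Hpc : forall y, in_interval tmin tmax y -> continuity_pt p y).
  { intros y Hy. unfold p. eapply dcont.
    apply dmul; [apply dconst| apply dminus; [apply Hode; auto| apply dconst]]. }
  assert (Q0 : Q 0 = 0) by (unfold Q; rewrite Hv0; lra).
  assert (Q t = 0).
  { destruct (Rtotal_order 0 t) as [Hlt|[Heq|Hgt]].
    - apply (proj1 (lin_zero Q p 0 t Hlt
        (fun y Hy => HD y (in_conv _ _ 0 t y H0 Ht Hy))
        (fun y Hy => Hpc y (in_conv _ _ 0 t y H0 Ht Hy)))); auto.
    - subst; auto.
    - apply (proj2 (lin_zero Q p t 0 Hgt
        (fun y Hy => HD y (in_conv _ _ t 0 y Ht H0 Hy))
        (fun y Hy => Hpc y (in_conv _ _ t 0 y Ht H0 Hy)))); auto. }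
  unfold Q in H. lra.
Qed.

Lemma atan_cons (c0 c1 a W v0 tmin : R) (tmax : option R) (v : R -> R) :
  0 < c1 -> 0 < W -> W ^ 2 = - (c0 ^ 2 + 4 * a * c1) ->
  (forall t, in_interval tmin tmax t -> derivable_pt_lim v t (a - c0 * v t - c1 * (v t) ^ 2)) ->
  v 0 = v0 -> in_interval tmin tmax 0 ->
  forall t, in_interval tmin tmax t ->
  atan ((v t + c0 / (2 * c1)) / (W / (2 * c1))) + W / 2 * t =
  atan ((v0 + c0 / (2 * c1)) / (W / (2 * c1))).
Proof.
  intros Hc1 HW HW2 Hode Hv0 H0 t Ht.
  set (k := W / (2 * c1)).
  assert (Hk : 0 < k) by (unfold k; apply Rdiv_lt_0_compat; lra).
  set (G := fun y => atan ((v y + c0 / (2 * c1)) / k) + W / 2 * y).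
  assert (HD : forall y, in_interval tmin tmax y -> derivable_pt_lim G y 0).
  { intros y Hy. unfold G. eapply dl_eq.
    - apply dplus.
      + apply (dcomp atan (fun y => (v y + c0 / (2 * c1)) / k)).
        * unfold Rdiv at 1. apply dmul; [apply dplus; [apply Hode; auto| apply dconst]| apply dconst].
        * apply derivable_pt_lim_atan.
      + apply dmul; [apply dconst| apply did].
    - cbv beta.
      set (u := v y + c0 / (2 * c1)).
      assert (Hg : a - c0 * v y - c1 * v y ^ 2 = - c1 * (u ^ 2 + k ^ 2)).
      { assert (Ha : a = - (W ^ 2 + c0 ^ 2) / (4 * c1)) by (rewrite HW2; field; lra).
        unfold u, k. rewrite Ha. field. lra. }
      rewrite Hg.
      assert (0 < u ^ 2 + k ^ 2) by nra.
      assert (0 < 1 + (u / k) ^ 2) by (pose proof (pow2_ge_0 (u / k)); lra).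
      unfold k in *. field. split; [lra| split; [lra|]]. pose proof (pow2_ge_0 (u * (2 * c1))). assert (0 < W ^ 2) by (apply pow_lt; lra). lra. }
  destruct (Rtotal_order 0 t) as [Hlt|[Heq|Hgt]].
  - destruct (mvt_I tmin tmax G (fun _ => 0) 0 t H0 Ht Hlt HD) as [c [E _]].
    unfold G in E. rewrite Hv0 in E. lra.
  - rewrite <- Heq, Hv0. lra.
  - destruct (mvt_I tmin tmax G (fun _ => 0) t 0 Ht H0 Hgt HD) as [c [E _]].
    unfold G in E. rewrite Hv0 in E. lra.
Qed.

Lemma real_facts c0 c1 a v0 tmin tmax (v : R -> R) :
  0 <= c0 -> 0 < c1 -> 0 < v0 -> 0 <= qdisc a c0 c1 ->
  ((0 <= a /\ v_inf a c0 c1 < v0 /\ tmax = None) \/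
   (a < 0 /\ tmax = Some (t_circ a c0 c1 v0))) ->
  tmin = t_inf a c0 c1 v0 ->
  (forall t, in_interval tmin tmax t -> derivable_pt_lim v t (a - c0 * v t - c1 * (v t) ^ 2)) ->
  v 0 = v0 ->
  in_interval tmin tmax 0 /\
  forall t, in_interval tmin tmax t -> 0 < v t /\ a - c0 * v t - c1 * (v t) ^ 2 <= 0.
Proof.
  intros Hc0 Hc1 Hv0 Hq Hcase Htmin Hode Hv.
  unfold t_inf, t_circ, v_inf, gamma, alpha, beta, Lf in *.
  assert (Hw0 : 0 <= wr a c0 c1) by apply sqrt_pos.
  assert (Hw2 : wr a c0 c1 * wr a c0 c1 = c0 ^ 2 + 4 * a * c1) by (apply sqrt_sqrt; exact Hq).
  revert Hcase Htmin Hw0 Hw2. generalize (wr a c0 c1). intros w Hcase Htmin Hw0 Hw2.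
  set (al := (w + c0) / 2) in *. set (be := (w - c0) / 2) in *.
  assert (Eal : al = (w + c0) / 2) by reflexivity. assert (Ebe : be = (w - c0) / 2) by reflexivity.
  clearbody al be.
  assert (Hab : al * be = a * c1) by (rewrite Eal, Ebe; nra).
  assert (Hal : 0 <= al) by lra.
  set (ga := c1 * v0 + al) in *. assert (Ega : ga = c1 * v0 + al) by reflexivity. clearbody ga.
  assert (Hga : w < ga).
  { destruct Hcase as [[Ha [Hvi _]]|[Ha _]].
    - assert (be < c1 * v0).
      { apply (Rmult_lt_reg_r (/ c1)); [apply Rinv_0_lt_compat; lra|].
        replace (c1 * v0 * / c1) with v0 by (field; lra). exact Hvi. }
      lra.
    - assert (w < c0) by nra. nra. }
  assert (Hgap : 0 < ga) by lra.
  set (r1 := be / c1). set (r2 := - al / c1).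
  assert (R1 : w = c1 * (r1 - r2)) by (unfold r1, r2; field_simplify; lra).
  assert (R2 : c0 = - (c1 * (r1 + r2))) by (unfold r1, r2; field_simplify; lra).
  assert (R3 : a = - (c1 * r1 * r2)).
  { unfold r1, r2. apply (Rmult_eq_reg_r c1); [|lra]. rewrite <- Hab. field. lra. }
  assert (Hg : forall x, a - c0 * x - c1 * x ^ 2 = - c1 * (x - r1) * (x - r2)).
  { intros x. rewrite R3 at 1. rewrite R2 at 1. ring. }
  assert (Gen : forall Z : R -> R, (forall t, derivable_pt_lim Z t (c1 - w * Z t)) ->
            Z 0 * (v0 - r2) = 1 -> in_interval tmin tmax 0 ->
            forall t, in_interval tmin tmax t -> (v t - r2) * Z t = 1).
  { intros Z HZ HZ0 H0. apply (riccati_Z c0 c1 a w r1 r2 v0 tmin tmax v Z); auto. }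
  destruct (Req_EM_T w 0) as [Hw|Hw].
  -
    set (Z := fun t => c1 / ga + c1 * t).
    assert (HZ : forall t, derivable_pt_lim Z t (c1 - w * Z t)).
    { intros t. unfold Z. eapply dl_eq.
      - apply dplus; [apply dconst| apply dmul; [apply dconst| apply did]].
      - rewrite Hw. ring. }
    assert (HZ0 : Z 0 * (v0 - r2) = 1).
    { unfold Z, r2. rewrite Ega. field. split; lra. }
    assert (Zpos : forall t, tmin < t -> 0 < Z t).
    { intros t Ht. rewrite Htmin in Ht. unfold Z.
      replace (c1 / ga + c1 * t) with (c1 * (t - (- (1 / ga)))) by (field; lra).
      apply Rmult_lt_0_compat; lra. }
    assert (Htm : tmin < 0).
    { rewrite Htmin. assert (0 < 1 / ga) by (apply Rdiv_lt_0_compat; lra). lra. }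
    destruct Hcase as [[Ha [Hvi Hmax]]|[Ha Hmax]].
    + assert (H0 : in_interval tmin tmax 0) by (rewrite Hmax; split; auto).
      split; auto. intros t Ht.
      assert (Ec0 : c0 = 0) by nra. assert (a = 0) by nra.
      assert (r1 = 0) by (unfold r1; rewrite Ebe, Hw, Ec0; field; lra).
      assert (r2 = 0) by (unfold r2; rewrite Eal, Hw, Ec0; field; lra).
      pose proof (Gen Z HZ HZ0 H0 t Ht). pose proof (Zpos t (proj1 Ht)).
      rewrite H2 in H3. assert (0 < v t) by nra.
      split; auto. rewrite Hg, H1, H2. nra.
    + assert (Hc0p : 0 < c0) by nra.
      assert (Halp : 0 < al) by lra.
      assert (Hbe : be = - al) by lra.
      assert (Haval : a = - al * al / c1).
      { apply (Rmult_eq_reg_r c1); [|lra]. rewrite <- Hab, Hbe. field. lra. }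
      assert (Hden : a + v0 * be = - al * ga / c1).
      { rewrite Haval, Hbe, Ega. field. lra. }
      assert (Htmaxv : - (v0 / (a + v0 * be)) = c1 * v0 / (al * ga)).
      { rewrite Hden. field. repeat split; lra. }
      assert (H0 : in_interval tmin tmax 0).
      { rewrite Hmax. split; auto. rewrite Htmaxv.
        apply Rdiv_lt_0_compat; nra. }
      split; auto. intros t Ht.
      assert (Ht' := Ht). rewrite Hmax in Ht'. destruct Ht' as [Ht1 Ht2]. rewrite Htmaxv in Ht2.
      pose proof (Gen Z HZ HZ0 H0 t Ht) as E. pose proof (Zpos t Ht1) as Zp.
      assert (Zlt : Z t < c1 / al).
      { unfold Z. apply (Rmult_lt_reg_r (al * ga / c1)); [apply Rdiv_lt_0_compat; nra|].
        replace ((c1 / ga + c1 * t) * (al * ga / c1)) with (al + t * (al * ga)) by (field; lra).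
        replace (c1 / al * (al * ga / c1)) with ga by (field; lra).
        assert (t * (al * ga) < c1 * v0).
        { apply (Rmult_lt_reg_r (/ (al * ga))); [apply Rinv_0_lt_compat; nra|].
          replace (t * (al * ga) * / (al * ga)) with t by (field; lra). exact Ht2. }
        lra. }
      assert (al / c1 < v t - r2).
      { apply (Rmult_lt_reg_r (Z t)); auto. rewrite E.
        apply (Rmult_lt_reg_r (c1 / al)); [apply Rdiv_lt_0_compat; lra|].
        replace (al / c1 * Z t * (c1 / al)) with (Z t) by (field; lra). lra. }
      assert (0 < v t) by (unfold r2 in *; replace (- al / c1) with (- (al / c1)) in * by (field; lra); lra).
      split; auto. rewrite Hg.
      assert (Hr1 : r1 < 0).
      { unfold r1; rewrite Hbe. pose proof (Rdiv_lt_0_compat al c1 Halp Hc1).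
        replace (- al / c1) with (- (al / c1)) by (field; lra); lra. }
      assert (Hr2 : r2 < 0) by (unfold r2; replace (- al / c1) with (- (al / c1)) by (field; lra);
        pose proof (Rdiv_lt_0_compat al c1 Halp Hc1); lra).
      assert (0 < (v t - r1) * (v t - r2)) by (apply Rmult_lt_0_compat; lra). nra.
  -
    assert (Hwp : 0 < w) by lra.
    set (D := c1 / w - c1 / ga).
    assert (HD : 0 < D).
    { unfold D. apply Rlt_0_minus. apply Rmult_lt_compat_l; [lra|]. apply Rinv_lt_contravar; nra. }
    set (Z := fun t => c1 / w - D * exp (- w * t)).
    assert (HZ : forall t, derivable_pt_lim Z t (c1 - w * Z t)).
    { intros t. unfold Z. eapply dl_eq.
      - apply dminus; [apply dconst| apply dmul; [apply dconst| apply dexpl]].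
      - cbv beta. field. lra. }
    assert (HZ0 : Z 0 * (v0 - r2) = 1).
    { unfold Z, D, r2. rewrite Rmult_0_r, exp_0, Ega. field. repeat split; lra. }
    set (X := 1 - w * (1 / ga)).
    assert (HX : 0 < X < 1).
    { unfold X. split.
      - apply Rlt_0_minus. replace (w * (1 / ga)) with (w / ga) by (field; lra).
        apply (Rmult_lt_reg_r ga); [lra|]. replace (w / ga * ga) with w by (field; lra). lra.
      - assert (0 < w * (1 / ga)) by (apply Rmult_lt_0_compat; [lra| apply Rdiv_lt_0_compat; lra]). lra. }
    assert (Htm : tmin < 0).
    { rewrite Htmin. fold X. assert (ln X < 0) by (rewrite <- ln_1; apply ln_increasing; lra).
      apply (Rmult_lt_reg_r w); [lra|]. replace (ln X / w * w) with (ln X) by (field; lra). lra. }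
    assert (Zpos : forall t, tmin < t -> 0 < Z t).
    { intros t Ht. rewrite Htmin in Ht. fold X in Ht.
      assert (exp (- w * t) < / X).
      { rewrite <- (exp_ln (/ X)) by (apply Rinv_0_lt_compat; lra).
        apply exp_increasing. rewrite ln_Rinv by lra.
        apply (Rmult_lt_reg_r (/ w)); [apply Rinv_0_lt_compat; lra|].
        replace (- w * t * / w) with (- t) by (field; lra).
        replace (- ln X * / w) with (- (ln X / w)) by (field; lra). lra. }
      assert (DX : D * / X = c1 / w).
      { unfold D, X. rewrite Ega in *. field. repeat split; lra. }
      unfold Z. assert (D * exp (- w * t) < D * / X) by (apply Rmult_lt_compat_l; lra). lra. }
    assert (Zlt : forall t, Z t < c1 / w).
    { intros t. unfold Z. pose proof (exp_pos (- w * t)). assert (0 < D * exp (- w * t)) by (apply Rmult_lt_0_compat; lra). lra. }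
    destruct Hcase as [[Ha [Hvi Hmax]]|[Ha Hmax]].
    + assert (H0 : in_interval tmin tmax 0) by (rewrite Hmax; split; auto).
      split; auto. intros t Ht.
      pose proof (Gen Z HZ HZ0 H0 t Ht) as E. pose proof (Zpos t (proj1 Ht)) as Zp.
      pose proof (Zlt t).
      assert (Hbe : 0 <= be) by (rewrite Ebe; nra).
      assert (0 <= r1) by (unfold r1; apply Rmult_le_pos; [lra| left; apply Rinv_0_lt_compat; lra]).
      assert (w / c1 < v t - r2).
      { apply (Rmult_lt_reg_r (Z t)); auto. rewrite E.
        apply (Rmult_lt_reg_r (c1 / w)); [apply Rdiv_lt_0_compat; lra|].
        replace (w / c1 * Z t * (c1 / w)) with (Z t) by (field; lra). lra. }
      assert (r1 - r2 = w / c1) by (rewrite R1; field; lra).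
      assert (0 < v t - r1) by lra.
      assert (0 < v t - r2) by (pose proof (Rdiv_lt_0_compat w c1 Hwp Hc1); lra).
      split; [lra|]. rewrite Hg.
      assert (0 < (v t - r1) * (v t - r2)) by (apply Rmult_lt_0_compat; lra). nra.
    + assert (Hbe : be < 0) by (assert (w < c0) by nra; lra).
      assert (Halp : 0 < al) by lra.
      assert (Hden : a + v0 * be = be * ga / c1).
      { apply (Rmult_eq_reg_r c1); [|lra]. rewrite Ega. field_simplify; [|lra]. rewrite <- Hab. field. }
      assert (Hdn : a + v0 * be < 0) by nra.
      set (Y := 1 - w * (v0 / (a + v0 * be))).
      assert (HY : 1 < Y).
      { unfold Y. assert (v0 / (a + v0 * be) < 0).
        { apply (Rmult_lt_reg_r (- (a + v0 * be))); [lra|].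
          replace (v0 / (a + v0 * be) * - (a + v0 * be)) with (- v0) by (field; lra). lra. }
        nra. }
      assert (H0 : in_interval tmin tmax 0).
      { rewrite Hmax. split; auto. fold Y.
        assert (0 < ln Y) by (rewrite <- ln_1; apply ln_increasing; lra).
        apply Rdiv_lt_0_compat; lra. }
      split; auto. intros t Ht.
      assert (Ht' := Ht). rewrite Hmax in Ht'. destruct Ht' as [Ht1 Ht2]. fold Y in Ht2.
      pose proof (Gen Z HZ HZ0 H0 t Ht) as E. pose proof (Zpos t Ht1) as Zp.
      assert (exp (- w * t) > / Y).
      { rewrite <- (exp_ln (/ Y)) by (apply Rinv_0_lt_compat; lra).
        apply exp_increasing. rewrite ln_Rinv by lra.
        apply (Rmult_lt_reg_r (/ w)); [apply Rinv_0_lt_compat; lra|].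
        replace (- w * t * / w) with (- t) by (field; lra).
        replace (- ln Y * / w) with (- (ln Y / w)) by (field; lra). lra. }
      assert (DY : D * / Y = c1 / w - c1 / al).
      { assert (Ew : w = al + be) by lra.
        assert (al * (be - v0 * c1) <> 0) by (apply Rlt_not_eq; apply Rmult_pos_neg; nra).
        unfold D, Y. rewrite Hden, Ega. rewrite Ew. field.
        rewrite Ew in Hwp. rewrite Ega in Hgap. repeat split; try lra. }
      assert (Zlt2 : Z t < c1 / al).
      { unfold Z. assert (D * / Y < D * exp (- w * t)) by (apply Rmult_lt_compat_l; lra). lra. }
      assert (al / c1 < v t - r2).
      { apply (Rmult_lt_reg_r (Z t)); auto. rewrite E.
        apply (Rmult_lt_reg_r (c1 / al)); [apply Rdiv_lt_0_compat; lra|].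
        replace (al / c1 * Z t * (c1 / al)) with (Z t) by (field; lra). lra. }
      assert (r2 = - (al / c1)) by (unfold r2; field; lra).
      assert (0 < v t) by lra.
      split; auto. rewrite Hg.
      assert (r1 < 0) by (unfold r1; pose proof (Rdiv_lt_0_compat (- be) c1 ltac:(lra) Hc1); replace (be / c1) with (- (- be / c1)) by (field; lra); lra).
      assert (0 < (v t - r1) * (v t - r2)) by (pose proof (Rdiv_lt_0_compat al c1 Halp Hc1); apply Rmult_lt_0_compat; lra). nra.
Qed.

Lemma atan_nonneg x : 0 <= x -> 0 <= atan x.
Proof. intros [H|H]; [rewrite <- atan_0; left; apply atan_increasing; auto| subst; rewrite atan_0; lra]. Qed.
Lemma atan_pos x : 0 < x -> 0 < atan x.
Proof. intros H; rewrite <- atan_0; apply atan_increasing; auto. Qed.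
Lemma atan_le x y : x <= y -> atan x <= atan y.
Proof. intros [H|H]; [left; apply atan_increasing; auto| subst; lra]. Qed.

Lemma cplx_facts c0 c1 a v0 tmin tmax (v : R -> R) :
  0 <= c0 -> 0 < c1 -> 0 < v0 -> qdisc a c0 c1 < 0 ->
  tmin = t_vinf a c0 c1 v0 -> tmax = Some (t_vcirc a c0 c1 v0) ->
  (forall t, in_interval tmin tmax t -> derivable_pt_lim v t (a - c0 * v t - c1 * (v t) ^ 2)) ->
  v 0 = v0 ->
  in_interval tmin tmax 0 /\
  forall t, in_interval tmin tmax t -> 0 < v t /\ a - c0 * v t - c1 * (v t) ^ 2 <= 0.
Proof.
  intros Hc0 Hc1 Hv0 Hq Htmin Htmax Hode Hv.
  unfold t_vinf, t_vcirc, theta0, theta1 in *.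
  assert (HW : 0 < wabs a c0 c1) by (apply sqrt_lt_R0; lra).
  assert (HW2 : wabs a c0 c1 * wabs a c0 c1 = - qdisc a c0 c1) by (apply sqrt_sqrt; lra).
  unfold qdisc in *.
  revert Htmin Htmax HW HW2. generalize (wabs a c0 c1). intros W Htmin Htmax HW HW2.
  assert (Ha : a < 0) by nra.
  rewrite (Rabs_left a Ha) in Htmax.
  set (th0 := atan (v0 * W / (v0 * c0 + 2 * - a))) in *.
  set (th1 := atan (W / (2 * c1 * v0 + c0))) in *.
  assert (P0 : 0 < th0) by (apply atan_pos; apply Rdiv_lt_0_compat; nra).
  assert (P1 : 0 < th1) by (apply atan_pos; apply Rdiv_lt_0_compat; nra).
  assert (H0 : in_interval tmin tmax 0).
  { rewrite Htmin, Htmax. split.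
    - assert (0 < 2 * th1 / W) by (apply Rdiv_lt_0_compat; lra). lra.
    - apply Rdiv_lt_0_compat; lra. }
  split; auto.
  intros t Ht.
  assert (HW2' : W ^ 2 = - (c0 ^ 2 + 4 * a * c1)) by (rewrite <- HW2; ring).
  pose proof (atan_cons c0 c1 a W v0 tmin tmax v Hc1 HW HW2' Hode Hv H0 t Ht) as Hc.
  set (A := (v0 + c0 / (2 * c1)) / (W / (2 * c1))) in *.
  set (B := c0 / W).
  assert (HA : 0 < A).
  { unfold A. assert (0 <= c0 / (2 * c1)) by (apply Rmult_le_pos; [lra| left; apply Rinv_0_lt_compat; lra]).
    apply Rdiv_lt_0_compat; [lra| apply Rdiv_lt_0_compat; lra]. }
  assert (HB : 0 <= B) by (unfold B; apply Rmult_le_pos; [lra| left; apply Rinv_0_lt_compat; lra]).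
  assert (Hsub : atan A = atan B + th0).
  { unfold th0.
    replace (v0 * W / (v0 * c0 + 2 * - a)) with (atan_sub A B).
    - pose proof PI_RGT_0. pose proof (atan_bound A). pose proof (atan_bound B).
      pose proof (atan_nonneg B HB). pose proof (atan_pos A HA).
      apply atan_sub_correct.
      + nra.
      + lra.
      + apply atan_bound.
    - unfold atan_sub, A, B.
      assert (Ha' : a = - (W ^ 2 + c0 ^ 2) / (4 * c1)) by (rewrite HW2'; field; lra).
      assert (0 < W * W) by nra. assert (0 <= v0 * c0) by nra. assert (0 <= c0 * c0) by nra.
      assert (0 <= v0 * c1 * c0) by (apply Rmult_le_pos; nra).
      rewrite Ha'. field. repeat split; try lra; apply Rgt_not_eq; nra. }
  assert (0 < v t).
  { destruct (Rlt_le_dec 0 (v t)) as [|Hle]; auto. exfalso.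
    assert ((v t + c0 / (2 * c1)) / (W / (2 * c1)) <= B).
    { unfold B. apply (Rmult_le_reg_r (W / (2 * c1))); [apply Rdiv_lt_0_compat; lra|].
      replace ((v t + c0 / (2 * c1)) / (W / (2 * c1)) * (W / (2 * c1))) with (v t + c0 / (2 * c1)) by (field; lra).
      replace (c0 / W * (W / (2 * c1))) with (c0 / (2 * c1)) by (field; lra). lra. }
    apply atan_le in H.
    destruct Ht as [_ Ht2]. rewrite Htmax in Ht2.
    assert (W / 2 * t < th0).
    { apply (Rmult_lt_reg_r (2 / W)); [apply Rdiv_lt_0_compat; lra|].
      replace (W / 2 * t * (2 / W)) with t by (field; lra).
      replace (th0 * (2 / W)) with (2 * th0 / W) by (field; lra). exact Ht2. }
    lra. }
  split; auto. nra.
Qed.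

Theorem mainTheorem11
  (c0 c1 a v0 : R) (Hc0 : 0 <= c0) (Hc1 : 0 < c1) (Hv0 : 0 < v0)
  (tmin : R) (tmax : option R)
  (Hcase :
     (0 <= qdisc a c0 c1 /\ 0 <= a /\ v_inf a c0 c1 < v0 /\
        tmin = t_inf a c0 c1 v0 /\ tmax = None) \/
     (0 <= qdisc a c0 c1 /\ a < 0 /\
        tmin = t_inf a c0 c1 v0 /\ tmax = Some (t_circ a c0 c1 v0)) \/
     (qdisc a c0 c1 < 0 /\
        tmin = t_vinf a c0 c1 v0 /\ tmax = Some (t_vcirc a c0 c1 v0)))
  (v s : R -> R)
  (Hode : forall t, in_interval tmin tmax t ->
            derivable_pt_lim v t (a - c0 * v t - c1 * (v t) ^ 2))
  (Hv_init : v 0 = v0)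
  (Hs : forall t, in_interval tmin tmax t -> derivable_pt_lim s t (v t))
  (Hs_init : s 0 = 0)
  (tstar : R) (Htstar : in_interval tmin tmax tstar) :
  let tk := newton_seq s v tmin (s tstar) in
  (forall k, in_interval tmin tmax (tk k)) /\
  Un_cv tk tstar /\
  (exists C N, forall k, (N <= k)%nat -> tk k <> tstar ->
       Rabs (tk (S k) - tstar) / (Rabs (tk k - tstar)) ^ 2 <= C).
Proof.
  intros tk.
  assert (F : in_interval tmin tmax 0 /\ forall t, in_interval tmin tmax t ->
                0 < v t /\ a - c0 * v t - c1 * (v t) ^ 2 <= 0).
  { destruct Hcase as [[Hq [Ha [Hvi [Hmin Hmax]]]]|[[Hq [Ha [Hmin Hmax]]]|[Hq [Hmin Hmax]]]].
    - apply (real_facts c0 c1 a v0 tmin tmax v); auto.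
    - apply (real_facts c0 c1 a v0 tmin tmax v); auto.
    - apply (cplx_facts c0 c1 a v0 tmin tmax v); auto. }
  destruct F as [H0 F].
  apply (core_main c0 c1 a Hc0 Hc1 tmin tmax v s Hode Hs tstar Htstar H0);
    intros t Ht; apply (F t Ht).
Qed.
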